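(* Let $(\Xi,Z)$ be a random marked closed set. Its distribution (as a probability measure on $\Phi_{usc}$) is completely determined by the joint probabilities \[\mathbb{P}\big(\sup_{x\in B_i\cap\Xi}Z(x)<t_i,\ B_i\cap\Xi\neq\varnothing,\ i\in I;\ B_j\cap\Xi=\varnothing,\ j\in\{1,\ldots,n\}\setminus I\big),\] where $n\in\mathbb{N}$, $B_1,\ldots,B_n$ are compact subsets of $\mathbb{R}^d$, $t_1,\ldots,t_n\in\overline{\mathbb{R}}$, and $I\subseteq\{1,\ldots,n\}$.
   Context: $\overline{\mathbb{R}}=[-\infty,\infty]$. $\Phi_{usc}=\{(X,f):\,X\subseteq\mathbb{R}^d\text{ closed},\ f:X\rightarrow\overline{\mathbb{R}}\text{ upper semi-continuous}\}$, identified via $\tau(X,f)=\{(x,t)\in X\times\overline{\mathbb{R}}:\,t\leq f(x)\}$ with a family of closed subsets of $\mathbb{R}^d\times\overline{\mathbb{R}}$ (with the Fell topology and its Borel $\sigma$-field). Given a complete probability space $(\Omega,\mathcal{A},\mathbb{P})$, a random marked closed set is a map $(\Xi,Z):\Omega\rightarrow\Phi_{usc}$ such that $\{\omega:\,\tau(\Xi,Z)\cap B\neq\varnothing\}\in\mathcal{A}$ for every compact $B\subseteq\mathbb{R}^d\times\overline{\mathbb{R}}$. *)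

(* Defs.v *)
From HB Require Import structures.
From mathcomp Require Import all_boot all_order all_algebra.
From mathcomp Require Import all_classical all_reals all_analysis.
Set Implicit Arguments. Unset Strict Implicit. Unset Printing Implicit Defensive.
Import Order.TTheory GRing.Theory Num.Theory.
Import numFieldNormedType.Exports.
Local Open Scope classical_set_scope.
Local Open Scope ring_scope.

Section Defs.
Variables (R : realType) (d : nat).

Local Notation V := 'rV[R]_d.
Local Notation E := (V * \bar R)%type.

(* f : X -> \bar R is upper semi-continuous on X (values outside X are
   irrelevant). *)
Definition usc_on (X : set V) (f : V -> \bar R) : Prop :=
  forall x, X x -> forall t : \bar R, (f x < t)%E ->
    \forall y \near x, X y -> (f y < t)%E.

Definition tau (X : set V) (f : V -> \bar R) : set E :=
  [set p | X p.1 /\ (p.2 <= f p.1)%E].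

Definition closedE : set (set E) := [set F | closed F].

Definition fell_subbase : set (set (set E)) :=
  [set U | (exists K : set E, compact K /\ U = [set F | closed F /\ F `&` K = set0])
        \/ (exists G : set E, open G /\ U = [set F | closed F /\ F `&` G !=set0])].

Definition is_topology_on (S : set (set E)) (O : set (set (set E))) : Prop :=
  O S /\ (forall A B, O A -> O B -> O (A `&` B)) /\
  (forall (I : Type) (A : I -> set (set E)), (forall i, O (A i)) ->
      O (\bigcup_i A i)).

Definition fell_open : set (set (set E)) :=
  smallest (is_topology_on closedE) fell_subbase.

Definition fell_borel : set (set (set E)) := <<s closedE, fell_open >>.

Definition random_marked_closed_set dT (T : measurableType dT)
    (Xi : T -> set V) (Z : T -> V -> \bar R) : Prop :=
  (forall w, closed (Xi w) /\ usc_on (Xi w) (Z w)) /\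
  (forall B : set E, compact B ->
     measurable [set w | tau (Xi w) (Z w) `&` B !=set0]).

Definition joint_event dT (T : measurableType dT)
    (Xi : T -> set V) (Z : T -> V -> \bar R)
    (n : nat) (B : 'I_n -> set V) (t : 'I_n -> \bar R) (I : {set 'I_n}) : set T :=
  [set w | forall i : 'I_n,
     (i \in I -> (ereal_sup (Z w @` (B i `&` Xi w)) < t i)%E /\ B i `&` Xi w !=set0)
     /\ (i \notin I -> B i `&` Xi w = set0)].

Definition distribution_rmcs dT (T : measurableType dT) (P : probability T R)
    (Xi : T -> set V) (Z : T -> V -> \bar R) (A : set (set E)) : \bar R :=
  P [set w | A (tau (Xi w) (Z w))].

End Defs.

(* Main.v *)
Require Import Defs.
From HB Require Import structures.
From mathcomp Require Import all_boot all_order all_algebra.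
From mathcomp Require Import all_classical all_reals all_analysis.
From mathcomp Require Import ring lra.
Import Order.TTheory GRing.Theory Num.Theory.
Import numFieldNormedType.Exports.
Local Open Scope classical_set_scope.
Local Open Scope ring_scope.
Set Implicit Arguments. Unset Strict Implicit. Unset Printing Implicit Defensive.

HB.instance Definition _ (U W : ptopologicalType) := Topological.on (U * W)%type.

Section Aux.
Variable R : realType.

Lemma grid_real (c c' : R) : c < c' ->
  exists (m : nat) (k : int), c < k%:~R / m.+1%:R < c'.
Proof.
move=> cc'.
have hx : 0 <= (c' - c)^-1 by rewrite invr_ge0 subr_ge0 ltW.
have := archi_boundP hx; set m := Num.Def.archi_bound _ => hm.
have Npos : 0 < m.+1%:R :> R by rewrite ltr0n.
have hm' : (c' - c)^-1 < m.+1%:R.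
  by apply: (lt_le_trans hm); rewrite ler_nat.
have h1 : 1 < (c' - c) * m.+1%:R.
  have cpos : 0 < c' - c by rewrite subr_gt0.
  by rewrite -(ltr_pdivrMl _ _ cpos) mulr1.
exists m, (Num.Def.floor (c * m.+1%:R) + 1).
have f1 := floorD1_gt (c * m.+1%:R).
have f2 := floor_le (c * m.+1%:R).
rewrite ltr_pdivlMr // ltr_pdivrMr //; apply/andP; split => //.
rewrite intrD /=.
lra.
Qed.

Lemma grid_ereal (a b : \bar R) : (a < b)%E ->
  exists (m : nat) (k : int), (a < (k%:~R / m.+1%:R)%:E < b)%E.
Proof.
have H (c c' : R) : (a <= c%:E)%E -> (c'%:E <= b)%E -> c < c' ->
    exists (m : nat) (k : int), (a < (k%:~R / m.+1%:R)%:E < b)%E.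
  move=> ac cb /grid_real [m [k /andP[h1 h2]]]; exists m, k.
  by rewrite (le_lt_trans ac) ?lte_fin // (lt_le_trans _ cb) ?lte_fin.
move: H; case: a => [r||]; case: b => [r'||] //= H.
- by rewrite lte_fin => rr'; apply: (H r r').
- by move=> _; apply: (H r (r + 1)) => //; rewrite ?leey // ltrDl.
- by move=> _; apply: (H (r' - 1) r') => //; rewrite ?leNye // gtrDl ltrN10.
- by move=> _; apply: (H 0 1) => //; rewrite ?leNye ?leey.
Qed.

Lemma seq_max_lt (s : seq (\bar R)) (t : \bar R) : (-oo < t)%E ->
  (forall u, u \in s -> (u < t)%E) ->
  exists2 m, (m < t)%E & forall u, u \in s -> (u <= m)%E.
Proof.
move=> tpos; elim: s => [|a s IH] H.
  by exists -oo%E => // u; rewrite in_nil.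
have [|m mt Hm] := IH.
  by move=> u us; apply: H; rewrite in_cons us orbT.
exists (Order.max a m); first by rewrite gt_max mt H ?mem_head.
move=> u; rewrite in_cons => /orP[/eqP->|us].
  by rewrite le_max lexx.
by rewrite le_max Hm // orbT.
Qed.

End Aux.

Section Topo.
Variables (R : realType) (d : nat).
Local Notation V := 'rV[R]_d.
Local Notation E := (V * \bar R)%type.

Lemma tau_closed (X : set V) (f : V -> \bar R) :
  closed X -> usc_on X f -> closed (tau X f).
Proof.
move=> clX uf; rewrite -openC openE => -[x s] /= ntau.
case: (pselect (X x)) => Xx; last first.
  have := closed_openC clX; rewrite openE => /(_ x Xx) nX.
  exists (~` X, setT) => //=; first by split => //; exact: filterT.
  by move=> [y u] /= [nXy _] [].
have fs : (f x < s)%E.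
  by rewrite ltNge; apply/negP => h; apply: ntau.
have [m [k /andP[h1 h2]]] := @grid_ereal R _ _ fs.
have := uf x Xx _ h1 => nu.
have ns : nbhs s [set u | ((k%:~R / m.+1%:R)%:E < u)%E].
  have := @open_ereal_gt_ereal R ((k%:~R / m.+1%:R)%:E).
  by rewrite openE => /(_ s h2).
exists ([set y | X y -> (f y < (k%:~R / m.+1%:R)%:E)%E], [set u | ((k%:~R / m.+1%:R)%:E < u)%E]); first by split; [exact: nu | exact: ns].
move=> [y u] /= [Hy Hu] [Xy fy].
have := Hy Xy => hlt.
by have := lt_le_trans Hu fy; rewrite ltNge (ltW hlt).
Qed.

Lemma usc_sup_lt (B X : set V) (f : V -> \bar R) (t : \bar R) :
  compact B -> closed X -> usc_on X f -> (B `&` X) !=set0 ->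
  (forall x, B x -> X x -> (f x < t)%E) ->
  (ereal_sup (f @` (B `&` X)) < t)%E.
Proof.
move=> cB clX uf [x0 [Bx0 Xx0]] H.
have tpos : (-oo < t)%E.
  by apply: (le_lt_trans _ (H x0 Bx0 Xx0)); rewrite leNye.
have K := compact_closedI cB clX.
rewrite compact_cover in K.
pose O (u : \bar R) := [set y | X y -> (f y < u)%E]°.
have cov : B `&` X `<=` cover [set u | (u < t)%E] O.
  move=> x [Bx Xx].
  have [m [k /andP[h1 h2]]] := @grid_ereal R _ _ (H x Bx Xx).
  exists ((k%:~R / m.+1%:R)%:E) => //.
  exact: (uf x Xx _ h1).
have [D' sD' cov'] := K _ _ O (fun u _ => @open_interior _ _) cov.
have [m mt Hm] : exists2 m, (m < t)%E & forall u, u \in finmap.enum_fset D' -> (u <= m)%E.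
  apply: seq_max_lt => // u uD.
  by have := sD' u uD; rewrite inE.
apply: le_lt_trans mt; apply: ge_ereal_sup => _ [x [Bx Xx] <-].
have [u uD Ou] := cov' x (conj Bx Xx).
have := interior_subset Ou Xx => fu.
exact: (le_trans (ltW fu) (Hm u uD)).
Qed.

End Topo.
Section Dynkin.
Variables (R : realType) (E : Type).
Variables (d1 : measure_display) (T1 : measurableType d1) (P1 : probability T1 R).
Variables (d2 : measure_display) (T2 : measurableType d2) (P2 : probability T2 R).
Variables (g1 : T1 -> E) (g2 : T2 -> E).

Definition Lsys : set (set E) := [set A | measurable (g1 @^-1` A) /\
  measurable (g2 @^-1` A) /\ P1 (g1 @^-1` A) = P2 (g2 @^-1` A)].

Lemma Lsys_dynkin : dynkin Lsys.
Proof.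
split.
- rewrite /Lsys /= !preimage_setT.
  split; first exact: measurableT.
  split; first exact: measurableT.
  by rewrite !probability_setT.
- move=> A [m1 [m2 e]]; rewrite /Lsys /=.
  rewrite (_ : g1 @^-1` (~` A) = ~` (g1 @^-1` A)) //.
  rewrite (_ : g2 @^-1` (~` A) = ~` (g2 @^-1` A)) //.
  split; first exact: measurableC.
  split; first exact: measurableC.
  by rewrite (probability_setC _ m1) (probability_setC _ m2) e.
- move=> F tF HF; rewrite /Lsys /= !preimage_bigcup.
  have m1 n : measurable (g1 @^-1` F n) by have [] := HF n.
  have m2 n : measurable (g2 @^-1` F n) by have [? []] := HF n.
  split; first exact: bigcupT_measurable.
  split; first exact: bigcupT_measurable.
  have t1 : trivIset setT (fun n => g1 @^-1` F n).
    move=> i j _ _ [x [h1 h2]]; exact: (tF i j I I (ex_intro _ (g1 x) (conj h1 h2))).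
  have t2 : trivIset setT (fun n => g2 @^-1` F n).
    move=> i j _ _ [x [h1 h2]]; exact: (tF i j I I (ex_intro _ (g2 x) (conj h1 h2))).
  rewrite (measure_bigcup P1 _ _ (fun n _ => m1 n) t1).
  rewrite (measure_bigcup P2 _ _ (fun n _ => m2 n) t2).
  apply: eq_eseriesr => n _.
  by have [_ []] := HF n.
Qed.

Lemma Lsys_sub (G : set (set E)) : setI_closed G -> G `<=` Lsys ->
  <<s G >> `<=` Lsys.
Proof.
move=> sI GL; apply: lambda_system_subset => //.
exact/dynkin_lambda_system/Lsys_dynkin.
Qed.

End Dynkin.
Lemma eq0P (U : Type) (A : set U) : A = set0 <-> forall x, ~ A x.
Proof. by split => [-> x //| H]; apply/seteqP; split => x // /H. Qed.

Lemma eq0N (U : Type) (A : set U) : A = set0 <-> ~ (A !=set0).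
Proof.
split; first by move=> -> [x].
by move=> H; apply/eq0P => x Ax; apply: H; exists x.
Qed.

Section Boxes.
Variables (R : realType) (d : nat).
Local Notation V := 'rV[R]_d.
Local Notation E := (V * \bar R)%type.

Definition box (B : set V) (t : \bar R) : set E := B `*` [set s | (t <= s)%E].

Lemma miss_set1 X f B t : tau X f `&` box B t = set0 <->
  tau X f `&` (B `*` [set t]) = set0.
Proof.
rewrite !eq0P; split => H [x s].
  move=> [[Xx fx] [Bx /= st]]; apply: (H (x, s)).
  by split; split => //=; rewrite st.
move=> [[Xx fx] [Bx /= ts]]; apply: (H (x, t)).
by split; split => //=; exact: le_trans fx.
Qed.

Lemma emp_iff (X : set V) f B : tau X f `&` box B -oo = set0 <-> B `&` X = set0.
Proof.
rewrite !eq0P; split => H.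
  move=> x [Bx Xx]; apply: (H (x, f x)); split; split => //=.
  exact: leNye.
by move=> [x s] [[Xx _] [Bx _]]; apply: (H x).
Qed.

End Boxes.
Section Single.
Variables (R : realType) (d : nat).
Local Notation V := 'rV[R]_d.
Local Notation E := (V * \bar R)%type.

Lemma miss_iff (X : set V) (f : V -> \bar R) (B : set V) (t : \bar R) : closed X -> usc_on X f -> compact B ->
  (tau X f `&` box B t = set0 <->
   (B `&` X = set0 \/ (B `&` X !=set0 /\ (ereal_sup (f @` (B `&` X)) < t)%E))).
Proof.
move=> clX uf cB; split => H.
  case: (pselect (B `&` X !=set0)) => ne; last by left; apply/eq0N.
  right; split => //; apply: usc_sup_lt => // x Bx Xx.
  rewrite ltNge; apply/negP => tf.
  by move/eq0P: H => /(_ (x, t)); apply; split; split => //=.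
apply/eq0P => -[x s] [[Xx fx] [Bx /= ts]].
case: H => [/eq0P H|[_ H]]; first exact: (H x).
have : (f x <= ereal_sup (f @` (B `&` X)))%E.
  by apply: ereal_sup_ubound; exists x.
move=> h; have := le_lt_trans (le_trans ts fx) (le_lt_trans h H).
by rewrite ltxx.
Qed.

End Single.

Section Proc.
Variables (R : realType) (d : nat).
Local Notation V := 'rV[R]_d.
Local Notation E := (V * \bar R)%type.
Variables (dT : measure_display) (T : measurableType dT).
Variables (Xi : T -> set V) (Z : T -> V -> \bar R).
Hypothesis rm : random_marked_closed_set Xi Z.

Let tw w := tau (Xi w) (Z w).

Lemma meas_miss B t : compact B -> measurable [set w | tw w `&` box B t = set0].
Proof.
move=> cB.
have h := rm.2 (B `*` [set t]) (@compact_setX _ _ B [set t] cB (@compact_set1 _ t)).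
have -> : [set w | tw w `&` box B t = set0] =
    ~` [set w | tau (Xi w) (Z w) `&` (B `*` [set t]) !=set0].
  apply/seteqP; split => w /=.
    by move/miss_set1/eq0N.
  by move=> H; apply/miss_set1/eq0N.
exact: measurableC.
Qed.

Definition ev n (B : 'I_n -> set V) (t : 'I_n -> \bar R) (I : {set 'I_n})
  (i : 'I_n) : set T :=
  if i \in I then (~` [set w | tw w `&` box (B i) -oo = set0]) `&`
                  [set w | tw w `&` box (B i) (t i) = set0]
  else [set w | tw w `&` box (B i) -oo = set0].

Lemma jointE (n : nat) (B : 'I_n -> set V) (t : 'I_n -> \bar R) (I : {set 'I_n}) : (forall i, compact (B i)) ->
  joint_event Xi Z B t I = \bigcap_(i in [set: 'I_n]) ev B t I i.
Proof.
move=> cB; apply/seteqP; split => w /= H.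
- move=> i _; have [clX uX] := rm.1 w; have [H1 H2] := H i.
  rewrite /ev; case: ifPn => iI.
    have [st ne] := H1 iI; split.
      by move=> /= /emp_iff /eq0N.
    rewrite /= /tw; apply/(miss_iff _ clX uX (cB i)); by right.
  exact/emp_iff/H2.
- move=> i; have [clX uX] := rm.1 w; have := H i Logic.I; rewrite /ev.
  case: ifPn => iI; last by move=> /emp_iff h; split.
  move=> [/= ne]; move/(miss_iff _ clX uX (cB i)) => -[h|[h1 h2]].
    by exfalso; apply: ne; apply/emp_iff.
  by split.
Qed.

Lemma meas_joint (n : nat) (B : 'I_n -> set V) (t : 'I_n -> \bar R) (I : {set 'I_n}) : (forall i, compact (B i)) ->
  measurable (joint_event Xi Z B t I : set T).
Proof.
move=> cB; rewrite jointE //; apply: fin_bigcap_measurable.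
  exact: finite_finset.
move=> i _; rewrite /ev; case: ifPn => _.
  apply: measurableI; last exact: meas_miss.
  exact/measurableC/meas_miss.
exact: meas_miss.
Qed.

Lemma missE (n : nat) (B : 'I_n -> set V) (t : 'I_n -> \bar R) : (forall i, compact (B i)) ->
  [set w | forall i : 'I_n, tw w `&` box (B i) (t i) = set0] =
  \bigcup_(I in [set: {set 'I_n}]) joint_event Xi Z B t I.
Proof.
move=> cB; apply/seteqP; split => w /= H.
- exists (finset (fun i => `[< B i `&` Xi w !=set0 >])) => //.
  have [clX uX] := rm.1 w.
  move=> i; rewrite inE; split.
    move=> /asboolP ne; have := H i; move/miss_iff => /(_ clX uX (cB i)).
    case => [/eq0N //|[_ h]]; by split.
  by move=> /asboolP ne; apply/eq0N.
- have [I _ HI] := H; move=> i; have [clX uX] := rm.1 w.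
  apply/miss_iff => //; have [H1 H2] := HI i.
  case: (boolP (i \in I)) => iI.
    by have [h1 h2] := H1 iI; right.
  by left; apply: H2.
Qed.

Lemma joint_triv (n : nat) (B : 'I_n -> set V) (t : 'I_n -> \bar R) : trivIset setT (fun I : {set 'I_n} => joint_event Xi Z B t I).
Proof.
move=> I J _ _ [w [HI HJ]]; apply/setP => i.
have [I1 I2] := HI i; have [J1 J2] := HJ i.
case: (boolP (i \in I)) => iI; case: (boolP (i \in J)) => iJ //.
- by have [_ ne] := I1 iI; exfalso; move/eq0N: (J2 iJ).
- by have [_ ne] := J1 iJ; exfalso; move/eq0N: (I2 iI).
Qed.

End Proc.

Section Two.
Variables (R : realType) (d : nat).
Local Notation V := 'rV[R]_d.
Local Notation E := (V * \bar R)%type.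

Definition Pi : set (set (set E)) := [set A | exists n (B : 'I_n -> set V)
  (t : 'I_n -> \bar R), (forall i, compact (B i)) /\
  A = [set F | forall i, F `&` box (B i) (t i) = set0]].

Lemma Pi_setI : setI_closed Pi.
Proof.
move=> _ _ [n1 [B1 [t1 [c1 ->]]]] [n2 [B2 [t2 [c2 ->]]]].
exists (n1 + n2)%N, (fun i => match fintype.split i with inl j => B1 j | inr j => B2 j end),
  (fun i => match fintype.split i with inl j => t1 j | inr j => t2 j end); split.
  by move=> i; case: (fintype.split i).
apply/seteqP; split => F /=.
  by move=> [H1 H2] i; case: (fintype.split i) => j; [exact: H1|exact: H2].
move=> H; split => j.
  by have := H (unsplit (inl j)); rewrite unsplitK.
by have := H (unsplit (inr j)); rewrite unsplitK.
Qed.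

Variables (d1 : measure_display) (T1 : measurableType d1) (P1 : probability T1 R).
Variables (d2 : measure_display) (T2 : measurableType d2) (P2 : probability T2 R).
Variables (Xi1 : T1 -> set V) (Z1 : T1 -> V -> \bar R).
Variables (Xi2 : T2 -> set V) (Z2 : T2 -> V -> \bar R).
Hypothesis rm1 : random_marked_closed_set Xi1 Z1.
Hypothesis rm2 : random_marked_closed_set Xi2 Z2.
Hypothesis Hj : forall (n : nat) (B : 'I_n -> set V) (t : 'I_n -> \bar R)
          (I : {set 'I_n}),
     (forall i, compact (B i)) ->
     P1 (joint_event Xi1 Z1 B t I) = P2 (joint_event Xi2 Z2 B t I).

Lemma Pi_L : Pi `<=` Lsys P1 P2 (fun w => tau (Xi1 w) (Z1 w)) (fun w => tau (Xi2 w) (Z2 w)).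
Proof.
move=> _ [n [B [t [cB ->]]]]; rewrite /Lsys /=.
set S1 := (fun w : T1 => _) @^-1` _.
set S2 := (fun w : T2 => _) @^-1` _.
have -> : S1 = \bigcup_(I in [set: {set 'I_n}]) joint_event Xi1 Z1 B t I.
  by rewrite -(missE rm1 t cB).
have -> : S2 = \bigcup_(I in [set: {set 'I_n}]) joint_event Xi2 Z2 B t I.
  by rewrite -(missE rm2 t cB).
split.
  apply: fin_bigcup_measurable; first exact: finite_finset.
  by move=> I _; exact: meas_joint.
split.
  apply: fin_bigcup_measurable; first exact: finite_finset.
  by move=> I _; exact: meas_joint.
rewrite (measure_fin_bigcup P1 finite_finset (@joint_triv _ _ _ _ Xi1 Z1 n B t)).
  rewrite (measure_fin_bigcup P2 finite_finset (@joint_triv _ _ _ _ Xi2 Z2 n B t)).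
    by apply: eq_fsbigr => I _; exact: Hj.
  by move=> I _; exact: meas_joint.
by move=> I _; exact: meas_joint.
Qed.

End Two.

Section Codes.
Variables (R : realType) (d : nat).
Local Notation V := 'rV[R]_d.
Local Notation E := (V * \bar R)%type.

Definition grid (N : nat) (z : 'rV[int]_d) : V :=
  \row_i ((z ord0 i)%:~R / N.+1%:R).
Definition oball (q : V) (r : R) : set V :=
  [set v | forall i, `|q ord0 i - v ord0 i| < r].
Definition cball (q : V) (r : R) : set V :=
  [set v | forall i, `|q ord0 i - v ord0 i| <= r].
Definition eo (o : option (nat * int)) : \bar R :=
  if o is Some (m, k) then (k%:~R / m.+1%:R)%:E else -oo%E.
Definition cen (b : nat * 'rV[int]_d * nat) : V := grid b.1.1 b.1.2.
Definition crad (b : nat * 'rV[int]_d * nat) : R := b.2.+1%:R^-1.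

Lemma cball_compact q r : compact (cball q r).
Proof.
have -> : cball q r = [set v : V | forall i,
    `[q ord0 i - r, q ord0 i + r]%classic (v ord0 i)].
  apply/seteqP; split => v /= H i.
    by have := H i; rewrite ler_distlC /= in_itv /=.
  by have := H i; rewrite ler_distlC /= in_itv /=.
exact: (@rV_compact _ _ (fun i => `[q ord0 i - r, q ord0 i + r]%classic)
  (fun i => @segment_compact _ _ _)).
Qed.

Lemma inv_lt (e : R) : 0 < e -> exists n : nat, n.+1%:R^-1 < e.
Proof.
move=> e0.
have hx : 0 <= e^-1 by rewrite invr_ge0 ltW.
have := archi_boundP hx; set m := Num.Def.archi_bound _ => hm.
exists m; rewrite -[_^-1]mul1r ltr_pdivrMr ?ltr0n //.
rewrite -(ltr_pdivrMl _ _ e0) mulr1.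
by apply: (lt_le_trans hm); rewrite ler_nat.
Qed.

Lemma ballrV (x v : V) e : ball x e v <-> 0 < e /\ forall i, `|x ord0 i - v ord0 i| < e.
Proof.
rewrite /ball /= /mx_ball; split => -[e0 H]; split => //.
  by move=> i; have := H ord0 i; rewrite -ball_normE.
by move=> i j; rewrite (ord1 i) -ball_normE; exact: H.
Qed.

Lemma floor_aux (a y : R) : a <= y -> y < a + 1 -> -1 < a - y < 1.
Proof. by move=> h1 h2; apply/andP; split; lra. Qed.

Lemma tri_aux (c x v r e : R) : `|c - x| < r -> `|c - v| <= r -> r < e / 2 ->
  `|x - v| <= `|x - c| + `|c - v| -> `|x - v| < e.
Proof. rewrite (distrC c x) => h1 h2 h3 h4. lra. Qed.

Lemma grid_approx (x : V) e : 0 < e ->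
  exists b, oball (cen b) (crad b) x /\ cball (cen b) (crad b) `<=` ball x e.
Proof.
move=> e0; have [M hM] : exists M : nat, M.+1%:R^-1 < e / 2.
  by apply: inv_lt; rewrite divr_gt0.
pose N : R := M.+1%:R.
have N0 : 0 < N by rewrite ltr0n.
exists (M, \row_i Num.Def.floor (x ord0 i * N), M).
have hq i : `|cen (M, \row_i Num.Def.floor (x ord0 i * N), M) ord0 i - x ord0 i|
    < crad (M, \row_i Num.Def.floor (x ord0 i * N), M).
  rewrite /cen /crad /grid /= !mxE.
  set a : R := (Num.Def.floor (x ord0 i * N))%:~R.
  have f1 : a <= x ord0 i * N by apply: floor_le.
  have f2 : x ord0 i * N < a + 1.
    by have := floorD1_gt (x ord0 i * N); rewrite intrD.
  rewrite (_ : a / M.+1%:R - x ord0 i = (a - x ord0 i * N) / N); last first.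
    by rewrite /N; field; rewrite ?pnatr_eq0 // gt_eqF.
  rewrite normrM (@gtr0_norm _ N^-1); last by rewrite invr_gt0.
  rewrite -[X in _ < X]mul1r ltr_pM2r ?invr_gt0 //.
  by rewrite ltr_norml; apply: floor_aux.
split => [i|v Hv]; first exact: hq.
apply/ballrV; split => // i.
have := hq i; have := Hv i.
set c := cen _ ord0 i; set r := crad _ => h1 h2.
apply: (tri_aux h2 h1 hM).
exact: ler_distD.
Qed.


Definition bcode := ((nat * 'rV[int]_d * nat) * option (nat * int) +
  (nat * 'rV[int]_d * nat) * option (nat * int))%type.

Definition Wb (c : bcode) : set (set E) :=
  match c with
  | inl (b, o) => [set F | F `&` box (cball (cen b) (crad b)) (eo o) = set0]
  | inr (b, o) => [set F | F `&` box (oball (cen b) (crad b)) (eo o) !=set0]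
  end.
Definition W (s : seq bcode) : set (set E) :=
  [set F | forall c, c \in s -> Wb c F].
Definition Hyp (F : set E) :=
  exists X f, closed X /\ usc_on X f /\ F = tau X f.
Definition Good (U : set (set E)) := forall F, Hyp F -> U F ->
  exists s, W s F /\ forall G, Hyp G -> W s G -> U G.

Lemma Hyp_closed F : Hyp F -> closed F.
Proof. by move=> [X [f [cX [uf ->]]]]; exact: tau_closed. Qed.

Lemma open_setX (A : set V) (B : set (\bar R)) : open A -> open B -> open (A `*` B).
Proof.
rewrite !openE => oA oB [x s] [Ax Bs].
by exists (A, B) => //; split; [exact: oA | exact: oB].
Qed.

Lemma Good_top : is_topology_on (@Defs.closedE R d) Good.
Proof.
split; [|split].
- move=> F HF _; exists [::]; split => [c|G HG _]; first by rewrite in_nil.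
  exact: Hyp_closed.
- move=> A B GA GB F HF [AF BF].
  have [s1 [W1 H1]] := GA F HF AF; have [s2 [W2 H2]] := GB F HF BF.
  exists (s1 ++ s2); split.
    by move=> c; rewrite mem_cat => /orP[]; [exact: W1|exact: W2].
  move=> G HG WG; split; [apply: H1 | apply: H2] => // c cs;
    by apply: WG; rewrite mem_cat cs ?orbT.
- move=> I A GA F HF [i _ AiF].
  have [s [Ws Hs]] := GA i F HF AiF.
  by exists s; split => // G HG WG; exists i => //; exact: Hs.
Qed.

Lemma ereal_nbhs_left (s : \bar R) (B : set (\bar R)) : (-oo < s)%E ->
  nbhs s B -> exists a : R, (a%:E < s)%E /\
    forall v, (a%:E < v)%E -> (v <= s)%E -> B v.
Proof.
case: s => [r| |] // _.
- move=> nB; have /nbhs_ballP[e e0 He] : nbhs r (fun x => B x%:E) by exact: nB.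
  exists (r - e); split; first by rewrite lte_fin gtrDl oppr_lt0.
  case => [w| |] //= h1 h2; apply: He.
  rewrite -ball_normE /ball_ /= ltr_distlC; apply/andP; split.
    by rewrite -lte_fin.
  by apply: (le_lt_trans (h2 : w <= r)); rewrite ltrDl.
- move=> [M [Mr HM]]; exists M; split; first by rewrite ltry.
  by move=> v h1 _; exact: HM.
Qed.


Lemma oball_open b : open (oball (cen b) (crad b)).
Proof.
rewrite (_ : oball _ _ = ball (cen b) (crad b)); first exact: ball_open.
apply/seteqP; split => v.
  by move=> H; apply/ballrV; split => //; rewrite invr_gt0 ltr0n.
by move/ballrV => [_ H].
Qed.

Lemma Good_miss K : compact K -> Good [set F | closed F /\ F `&` K = set0].
Proof.
move=> cK F HF [clF FK].
have [X [f [clX [uf eF]]]] := HF.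
pose Ic := ((nat * 'rV[int]_d * nat) * option (nat * int))%type.
pose D := [set c : Ic | F `&` box (cball (cen c.1) (crad c.1)) (eo c.2) = set0].
pose O (c : Ic) : set E := oball (cen c.1) (crad c.1) `*`
  (if c.2 is None then setT else [set s | (eo c.2 < s)%E]).
have Oopen c : open (O c).
  apply: open_setX; first exact: oball_open.
  case: c => b [p|] /=; last exact: openT.
  exact: open_ereal_gt_ereal.
have OD c : O c `<=` box (cball (cen c.1) (crad c.1)) (eo c.2).
  case: c => b [p|] [v s] [ov os]; (split => /=; first by move=> i; apply/ltW/ov).
    exact: ltW.
  exact: leNye.
have cov : K `<=` cover D O.
  move=> [x s] Kp.
  have nF : ~ F (x, s) by move=> Fp; move/eq0P: FK => /(_ (x, s)); apply.
  rewrite eF in nF.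
  case: (pselect (X x)) => Xx.
  - have fs : (f x < s)%E by rewrite ltNge; apply/negP => h; apply: nF.
    have [m [k /andP[h1 h2]]] := @grid_ereal R _ _ fs.
    have nu := uf x Xx _ h1.
    have /nbhs_ballP[e e0 He] := nu.
    have [b [ob cb]] := grid_approx x e0.
    exists (b, Some (m, k)); last by split.
    rewrite /D /= eF; apply/eq0P => -[y u] [[Xy fy] [cby tu]].
    have := He y (cb y cby) Xy => /= fyt.
    by have := lt_le_trans fyt (le_trans tu fy); rewrite ltxx.
  - have := closed_openC clX; rewrite openE => /(_ x Xx) nX.
    have /nbhs_ballP[e e0 He] := nX.
    have [b [ob cb]] := grid_approx x e0.
    exists (b, None); last by split.
    rewrite /D /= eF; apply/eq0P => -[y u] [[Xy fy] [cby tu]].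
    exact: (He y (cb y cby) Xy).
rewrite compact_cover in cK.
have [D' sD cov'] := cK _ D O (fun c _ => Oopen c) cov.
exists (map inl (finmap.enum_fset D')); split.
  move=> c /mapP[c' c'D ->]; have := sD c' c'D; rewrite inE.
  by case: c' {c'D} => b o.
move=> G HG WG; split; first exact: Hyp_closed.
apply/eq0P => p [Gp Kp]; have [c cD Oc] := cov' p Kp.
have := WG (inl c) (map_f _ cD).
case: c cD Oc => b o cD Oc /= WGc.
by move/eq0P: WGc => /(_ p); apply; split => //; exact: (OD (b, o)).
Qed.

Lemma Good_hit Gop : open Gop -> Good [set F | closed F /\ F `&` Gop !=set0].
Proof.
move=> oG F HF [clF [[x s] [Fp Gp]]].
have [X [f [clX [uf eF]]]] := HF.
have := oG; rewrite openE => /(_ _ Gp) nG.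
case: nG => -[A B] /= [nA nB] sAB.
have /nbhs_ballP[e e0 He] := nA.
have [b [ob cb]] := grid_approx x e0.
have Fp' := Fp; rewrite eF in Fp'; case: Fp' => Xx sfx.
have [op [os Ho]] : exists op, (eo op <= s)%E /\
    forall u, (eo op <= u)%E -> exists u', B u' /\ (u' <= u)%E.
  case: (pselect (s = -oo%E)) => [sinf|sninf].
    exists None; split; first exact: leNye.
    move=> u _; exists s; split; first exact: nbhs_singleton.
    by rewrite sinf leNye.
  have spos : (-oo < s)%E by rewrite ltNge leeNy_eq; apply/eqP.
  have [a [as' Ha]] := ereal_nbhs_left spos nB.
  have [m [k /andP[h1 h2]]] := @grid_ereal R _ _ as'.
  exists (Some (m, k)); split; first exact: ltW.
  move=> u ou; exists (Order.min u s); split; last by rewrite ge_min lexx.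
  apply: Ha; last by rewrite ge_min lexx orbT.
  by rewrite lt_min (lt_le_trans h1 ou) (lt_trans h1 h2).
exists [:: inr (b, op)]; split.
  by move=> c; rewrite inE => /eqP -> /=; exists (x, s); split => //.
move=> G HG WG; split; first exact: Hyp_closed.
have := WG (inr (b, op)) (mem_head _ _) => -[[y u] [Gyu [oy ou]]].
have [Y [g [_ [_ eG]]]] := HG.
have [u' [Bu' u'u]] := Ho u ou.
exists (y, u'); split.
  move: Gyu; rewrite eG => -[Yy ug]; split => //; exact: le_trans u'u ug.
apply: sAB; split => /=; last exact: Bu'.
by apply: He; apply: cb => i; apply/ltW/oy.
Qed.

Lemma Good_sub : @fell_subbase R d `<=` Good.
Proof.
move=> U [[K [cK ->]]|[G [oG ->]]]; [exact: Good_miss | exact: Good_hit].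
Qed.

Lemma fell_open_Good : @fell_open R d `<=` Good.
Proof. exact: smallest_sub Good_top Good_sub. Qed.

End Codes.

Section Meas.
Variables (R : realType) (d : nat).
Local Notation V := 'rV[R]_d.
Local Notation E := (V * \bar R)%type.
Local Notation mT := (g_sigma_algebraType (@Pi R d)).
Local Notation cen := (@cen R d).
Local Notation crad := (@crad R d).
Local Notation eo := (@eo R).

Lemma lem3 (x r a b : R) : a < r - x -> b <= a -> x <= r - b.
Proof. move=> h1 h2; lra. Qed.

Lemma miss_Pi (B : set V) t : compact B ->
  measurable ([set F : set E | F `&` box B t = set0] : set mT).
Proof.
move=> cB; apply: sub_sigma_algebra; exists 1%N, (fun=> B), (fun=> t).
split => //; apply/seteqP; split => F /=; first by move=> H i.
by move/(_ ord0).
Qed.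

Lemma Wb_meas (c : bcode d) : measurable (Wb c : set mT).
Proof.
case: c => -[b o]; first by rewrite /Wb; apply: miss_Pi; exact: cball_compact.
have -> : Wb (inr (b, o)) = ~` \bigcap_n
    [set F | F `&` box (cball (cen b) (crad b - n.+1%:R^-1)) (eo o) = set0].
  apply/seteqP; split => F /=.
    move=> [[v s] [Fp [ov os]]] Hall.
    have hi i : exists n : nat, n.+1%:R^-1 < crad b - `|cen b ord0 i - v ord0 i|.
      by apply: inv_lt; rewrite subr_gt0; exact: ov.
    have [g Hg] := choice hi.
    pose N := (\max_(i < d) g i)%N.
    move/eq0P: (Hall N Logic.I) => /(_ (v, s)); apply; split => //; split => //= i.
    have h1 := Hg i.
    have h2 : N.+1%:R^-1 <= (g i).+1%:R^-1 :> R.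
      rewrite lef_pV2 ?posrE ?ltr0n // ler_nat ltnS.
      exact: (@leq_bigmax _ (fun i => g i) i).
    exact: lem3 h1 h2.
  move=> nH; have [n Hn] : exists n, ~ (F `&` box (cball (cen b) (crad b - n.+1%:R^-1)) (eo o) = set0).
    apply: contrapT => H; apply: nH => n _; apply: contrapT => h; apply: H; by exists n.
  move/eq0N: Hn; apply: contra_notP => nne [[v s] [Fp [cv os]]].
  apply: nne; exists (v, s); split => //; split => //= i.
  apply: (le_lt_trans (cv i)); rewrite gtrBl invr_gt0 ltr0n //.
apply: measurableC; apply: bigcapT_measurable => n.
apply: miss_Pi; exact: cball_compact.
Qed.

Lemma W_meas (s : seq (bcode d)) : measurable (W s : set mT).
Proof.
elim: s => [|c s IH].
  rewrite (_ : W [::] = setT); first exact: measurableT.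
  by apply/seteqP; split => F // _ c; rewrite in_nil.
rewrite (_ : W (c :: s) = Wb c `&` W s); first exact: measurableI (Wb_meas c) IH.
apply/seteqP; split => F /=.
  by move=> H; split; [apply: H; rewrite mem_head | move=> c' cs; apply: H; rewrite in_cons cs orbT].
by move=> [h1 h2] c'; rewrite in_cons => /orP[/eqP ->|]; [exact: h1| exact: h2].
Qed.

Definition Mc : set (set (set E)) := [set S | exists A,
  measurable (A : set mT) /\ forall F, Hyp F -> (S F <-> A F)].

Lemma Good_M U : Good U -> Mc U.
Proof.
move=> GU.
pose Af (n : nat) : set (set E) := if @unpickle (seq (bcode d)) n is Some s then
  (if `[< forall G, Hyp G -> W s G -> U G >] then W s else set0) else set0.
exists (\bigcup_n Af n); split.
  apply: bigcupT_measurable => n; rewrite /Af; case: unpickle => [s|];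
    last exact: measurable0.
  by case: asboolP => _; [exact: W_meas | exact: measurable0].
move=> F HF; split.
  move=> UF; have [s [Ws Hs]] := GU F HF UF; exists (pickle s) => //.
  by rewrite /Af pickleK; case: asboolP.
move=> [n _]; rewrite /Af; case: unpickle => [s|] //.
by case: asboolP => // H WF; exact: H.
Qed.

Lemma Mc_sigma : sigma_algebra (@Defs.closedE R d) Mc.
Proof.
split.
- exists set0; split; first exact: measurable0.
  by move=> F _; split.
- move=> S [A [mA HA]]; exists (~` A); split; first exact: measurableC.
  move=> F HF; split => /=.
    by move=> [cF nS] AF; apply: nS; apply/(HA F HF).
  move=> nA; split; first exact: Hyp_closed.
  by move=> SF; apply: nA; apply/(HA F HF).
- move=> S HS; have [g Hg] := choice HS.
  exists (\bigcup_n g n); split.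
    by apply: bigcupT_measurable => n; have [] := Hg n.
  move=> F HF; split => -[n _ h]; exists n => //; have [_ e] := Hg n.
    exact/(e F HF).
  exact/(e F HF).
Qed.

Lemma fell_borel_Mc : @fell_borel R d `<=` Mc.
Proof.
apply: smallest_sub; first exact: Mc_sigma.
by move=> U /fell_open_Good /Good_M.
Qed.

End Meas.

Theorem theorem2p3 (R : realType) (d : nat)
  (d1 : measure_display) (T1 : measurableType d1) (P1 : probability T1 R)
  (d2 : measure_display) (T2 : measurableType d2) (P2 : probability T2 R)
  (Xi1 : T1 -> set 'rV[R]_d) (Z1 : T1 -> 'rV[R]_d -> \bar R)
  (Xi2 : T2 -> set 'rV[R]_d) (Z2 : T2 -> 'rV[R]_d -> \bar R) :
  measure_is_complete P1 -> measure_is_complete P2 ->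
  random_marked_closed_set Xi1 Z1 -> random_marked_closed_set Xi2 Z2 ->
  (forall (n : nat) (B : 'I_n -> set 'rV[R]_d) (t : 'I_n -> \bar R)
          (I : {set 'I_n}),
     (forall i, compact (B i)) ->
     P1 (joint_event Xi1 Z1 B t I) = P2 (joint_event Xi2 Z2 B t I)) ->
  forall A : set (set ('rV[R]_d * \bar R)), fell_borel A ->
    distribution_rmcs P1 Xi1 Z1 A = distribution_rmcs P2 Xi2 Z2 A.
Proof.
move=> _ _ rm1 rm2 Hj A /fell_borel_Mc [A' [mA' HA']].
have L := Lsys_sub (@Pi_setI R d) (Pi_L rm1 rm2 Hj) mA'.
have [_ [_ e]] := L.
rewrite /distribution_rmcs.
have H1 w : Hyp (tau (Xi1 w) (Z1 w)).
  by have [c u] := rm1.1 w; exists (Xi1 w), (Z1 w).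
have H2 w : Hyp (tau (Xi2 w) (Z2 w)).
  by have [c u] := rm2.1 w; exists (Xi2 w), (Z2 w).
have -> : [set w | A (tau (Xi1 w) (Z1 w))] =
    (fun w => tau (Xi1 w) (Z1 w)) @^-1` A'.
  by apply/seteqP; split => w /=; move/(HA' _ (H1 w)).
have -> : [set w | A (tau (Xi2 w) (Z2 w))] =
    (fun w => tau (Xi2 w) (Z2 w)) @^-1` A'.
  by apply/seteqP; split => w /=; move/(HA' _ (H2 w)).
exact: e.
Qed.
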